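(* Let $M$ be a nearly finitary matroid on ground set $E$ that is not $n$-nearly finitary for any $n\in\mathbb{N}$, and let $T$ be a set of coloops of $M$. Then the contraction $M/T$ is a nearly finitary matroid that is not $n$-nearly finitary for any $n\in\mathbb{N}$.
   Context: Matroids (possibly infinite): $\emptyset$ independent; subsets of independent sets independent; if $B$ is maximal independent and $A$ non-maximal independent, then $A\cup\{b\}$ is independent for some $b\in B\setminus A$; for independent $A\subseteq X\subseteq E$ there is a maximal independent $S$ with $A\subseteq S\subseteq X$. Bases are maximal independent sets. The dual $M^*$ has as independent sets the subsets of complements of bases of $M$. For $X\subseteq E$, $M|X$ is the restriction (independent sets of $M$ contained in $X$), and the contraction $M/T$ is $(M^*|(E\setminus T))^*$. A coloop of $M$ is an element contained in every base of $M$ (equivalently, in no circuit). The finitarization $M^{\mathrm{fin}}$ has as independent sets those sets all of whose finite subsets are independent in $M$. $M$ is nearly finitary if $F\setminus B$ is finite whenever a base $F$ of $M^{\mathrm{fin}}$ contains a base $B$ of $M$; $n$-nearly finitary if $|F\setminus B|\le n$ for all such pairs. *)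

(* Defs.v *)
From Stdlib Require Import List.
Set Implicit Arguments.

Definition subset {E : Type} (A B : E -> Prop) : Prop := forall x, A x -> B x.

Definition finite {E : Type} (A : E -> Prop) : Prop :=
  exists l : list E, forall x, A x -> In x l.

Definition card_le {E : Type} (A : E -> Prop) (n : nat) : Prop :=
  exists l : list E, length l <= n /\ forall x, A x -> In x l.

Record setsys (E : Type) := SetSys {
  ground : E -> Prop;
  indep : (E -> Prop) -> Prop }.

Definition is_base {E : Type} (M : setsys E) (B : E -> Prop) : Prop :=
  indep M B /\ forall A, indep M A -> subset B A -> subset A B.

(* Matroid axioms (I1), (I2), (I3), (IM); independent sets lie in the ground set. *)
Definition is_matroid {E : Type} (M : setsys E) : Prop :=
  (forall A, indep M A -> subset A (ground M)) /\
  indep M (fun _ => False) /\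
  (forall A B, indep M A -> subset B A -> indep M B) /\
  (forall A B, indep M A -> ~ is_base M A -> is_base M B ->
     exists b, B b /\ ~ A b /\ indep M (fun x => A x \/ x = b)) /\
  (forall A X, indep M A -> subset A X -> subset X (ground M) ->
     exists S, subset A S /\ subset S X /\ indep M S /\
       forall S', indep M S' -> subset S S' -> subset S' X -> subset S' S).

Definition dual {E : Type} (M : setsys E) : setsys E :=
  SetSys (ground M)
    (fun A => subset A (ground M) /\
       exists B, is_base M B /\ forall x, A x -> ~ B x).

Definition restrict {E : Type} (M : setsys E) (X : E -> Prop) : setsys E :=
  SetSys (fun x => ground M x /\ X x) (fun A => indep M A /\ subset A X).

Definition contract {E : Type} (M : setsys E) (T : E -> Prop) : setsys E :=
  dual (restrict (dual M) (fun x => ground M x /\ ~ T x)).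

Definition is_coloop {E : Type} (M : setsys E) (e : E) : Prop :=
  ground M e /\ forall B, is_base M B -> B e.

Definition finitarization {E : Type} (M : setsys E) : setsys E :=
  SetSys (ground M)
    (fun A => subset A (ground M) /\
       forall F, finite F -> subset F A -> indep M F).

Definition nearly_finitary {E : Type} (M : setsys E) : Prop :=
  forall F B, is_base (finitarization M) F -> is_base M B -> subset B F ->
    finite (fun x => F x /\ ~ B x).

Definition n_nearly_finitary {E : Type} (n : nat) (M : setsys E) : Prop :=
  forall F B, is_base (finitarization M) F -> is_base M B -> subset B F ->
    card_le (fun x => F x /\ ~ B x) n.

(* Main.v *)
Require Import Defs.
From Stdlib Require Import List Classical.
Set Implicit Arguments.

Lemma extend_base E (M : setsys E) : is_matroid M ->
  forall A, indep M A -> exists B, is_base M B /\ subset A B.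
Proof.
  intros (H1 & H0 & H2 & H3 & H4) A HA.
  destruct (H4 A (ground M) HA (H1 A HA) (fun x h => h)) as (S & HAS & HSX & HS & Hmax).
  exists S. split; auto. split; auto.

Qed.

Lemma cind E (M : setsys E) T : is_matroid M -> (forall t, T t -> is_coloop M t) ->
  forall A, indep (contract M T) A <-> indep M A /\ (forall x, A x -> ~ T x).
Proof.
  intros HM HT A. pose proof HM as (H1 & H0 & H2 & H3 & H4). split.
  - intros [HAg (B' & [HB'i HB'max] & HAB')].
    simpl in HAg, HB'i. destruct HB'i as [[HB'g (B & HB & HB'B)] HB'X].
    assert (HAT: forall x, A x -> ~T x) by (intros x Hx; apply HAg in Hx; tauto).
    split; auto. apply (H2 B A). apply HB. intros x Hx. apply NNPP; intro HnB.
    apply (HAB' x Hx). apply (HB'max (fun y => B' y \/ y = x)).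
    + simpl. split; [split|].
      * intros y [Hy|<-]; auto. apply HAg in Hx; tauto.
      * exists B; split; auto. intros y [Hy|<-]; auto.
      * intros y [Hy|<-]; auto. apply HAg in Hx; tauto.
    + intros y Hy; auto.
    + right; reflexivity.
  - intros [HA HAT]. destruct (extend_base HM _ HA) as (B & HB & HAB).
    assert (HTB: subset T B) by (intros t Ht; apply (proj2 (HT t Ht)); auto).
    split.
    + simpl. intros x Hx. pose proof (H1 A HA x Hx). specialize (HAT x Hx). tauto.
    + exists (fun x => ground M x /\ ~ B x). split; [split|].
      * simpl. split; [split|].
        -- intros x Hx; tauto.
        -- exists B; split; auto. intros x Hx; tauto.
        -- intros x [Hg HnB]; split; [exact Hg|]. intro Ht; apply HnB, HTB, Ht.
      * intros A' HA' HsA'. simpl in HA'. destruct HA' as [[HA'g (B2 & HB2 & HA'B2)] HA'X].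
        assert (HB2B: subset B2 B).
        { intros y Hy. apply NNPP; intro HnB. apply (HA'B2 y). apply HsA'. split; auto.
          apply (H1 B2 (proj1 HB2)); auto. auto. }
        assert (HBB2: subset B B2) by (apply (proj2 HB2); [apply HB | auto]).
        intros x Hx. split. apply HA'g in Hx; tauto. intro HBx. apply (HA'B2 x Hx). apply HBB2; auto.
      * intros x Hx [_ HnB]. apply HnB, HAB, Hx.
Qed.

Arguments cind {E M T}.

Lemma coloop_base E (M : setsys E) T : (forall t, T t -> is_coloop M t) ->
  forall B, is_base M B -> subset T B.
Proof. intros HT B HB t Ht. apply (proj2 (HT t Ht)); auto. Qed.
Arguments coloop_base {E M T}.

Lemma base_a E (M : setsys E) T : is_matroid M -> (forall t, T t -> is_coloop M t) ->
  forall B, is_base (contract M T) B -> is_base M (fun x => B x \/ T x).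
Proof.
  intros HM HT B [HBi HBmax]. pose proof HM as (H1 & H0 & H2 & H3 & H4).
  apply (cind HM HT) in HBi. destruct HBi as [HBi HBT].
  destruct (extend_base HM _ HBi) as (B1 & HB1 & HBB1).
  pose proof (coloop_base HT _ HB1) as HTB1.
  split.
  - apply (H2 B1). apply HB1. intros x [Hx|Hx]; auto.
  - intros A HA HsA.
    assert (HAc: indep (contract M T) (fun x => A x /\ ~ T x)).
    { apply (cind HM HT). split. apply (H2 A); auto. intros x [Hx _]; exact Hx.
      intros x [_ Hx]; exact Hx. }
    specialize (HBmax _ HAc). intros x Hx.
    destruct (classic (T x)) as [Ht|Hnt]; auto. left. apply HBmax; auto.
    intros y Hy. split; auto.
Qed.
Arguments base_a {E M T}.

Lemma base_b E (M : setsys E) T : is_matroid M -> (forall t, T t -> is_coloop M t) ->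
  forall B, is_base M B -> is_base (contract M T) (fun x => B x /\ ~ T x).
Proof.
  intros HM HT B [HBi HBmax]. pose proof HM as (H1 & H0 & H2 & H3 & H4).
  split.
  - apply (cind HM HT). split. apply (H2 B); auto. intros x [Hx _]; exact Hx.
    intros x [_ Hx]; exact Hx.
  - intros A HA HsA. apply (cind HM HT) in HA. destruct HA as [HA HAT].
    destruct (extend_base HM _ HA) as (B2 & HB2 & HAB2).
    pose proof (coloop_base HT _ HB2) as HTB2.
    assert (HBB2 : subset B B2).
    { intros x Hx. destruct (classic (T x)) as [Ht|Hnt]; auto. }
    pose proof (HBmax _ (proj1 HB2) HBB2) as HB2B.
    intros x Hx. split; auto.
Qed.
Arguments base_b {E M T}.

Lemma find E (M : setsys E) T : is_matroid M -> (forall t, T t -> is_coloop M t) ->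
  forall A, indep (finitarization (contract M T)) A <->
    indep (finitarization M) A /\ (forall x, A x -> ~ T x).
Proof.
  intros HM HT A. simpl. split.
  - intros [Hg Hf]. split; [split|].
    + intros x Hx. apply Hg in Hx. tauto.
    + intros F HF HFA. exact (proj1 (proj1 (cind HM HT F) (Hf F HF HFA))).
    + intros x Hx. apply Hg in Hx. tauto.
  - intros [[Hg Hf] HAT]. split.
    + intros x Hx. simpl. split; auto.
    + intros F HF HFA. apply (cind HM HT). split; auto.
Qed.
Arguments find {E M T}.

Lemma keyK E (M : setsys E) T : is_matroid M -> (forall t, T t -> is_coloop M t) ->
  forall A, indep (finitarization M) A -> indep (finitarization M) (fun x => A x \/ T x).
Proof.
  intros HM HT A [Hg Hf]. pose proof HM as (H1 & H0 & H2 & H3 & H4). split.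
  - intros x [Hx|Hx]; auto. exact (proj1 (HT x Hx)).
  - intros G [l Hl] HGA.
    assert (HGi: indep M (fun x => G x /\ A x)).
    { apply Hf. exists l; intros x [Hx _]; auto. intros x [_ Hx]; auto. }
    destruct (extend_base HM _ HGi) as (B & HB & HGB).
    pose proof (coloop_base HT _ HB) as HTB.
    apply (H2 B). apply HB. intros x Hx. destruct (HGA x Hx) as [Ha|Ht]; auto.
Qed.
Arguments keyK {E M T}.

Lemma base_c E (M : setsys E) T : is_matroid M -> (forall t, T t -> is_coloop M t) ->
  forall F, is_base (finitarization (contract M T)) F ->
    is_base (finitarization M) (fun x => F x \/ T x).
Proof.
  intros HM HT F [HFi HFmax]. apply (find HM HT) in HFi. destruct HFi as [HFi HFT].
  split.
  - apply (keyK HM HT); auto.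
  - intros A HA HsA.
    assert (HAc: indep (finitarization (contract M T)) (fun x => A x /\ ~ T x)).
    { apply (find HM HT). split.
      - destruct HA as [Hg Hf]. split.
        + intros x [Hx _]; auto.
        + intros G HG HGA. apply Hf; auto. intros x Hx; apply HGA; auto.
      - intros x [_ Hx]; exact Hx. }
    specialize (HFmax _ HAc). intros x Hx.
    destruct (classic (T x)) as [Ht|Hnt]; auto. left. apply HFmax; auto.
    intros y Hy. split; auto.
Qed.
Arguments base_c {E M T}.

Lemma base_d E (M : setsys E) T : is_matroid M -> (forall t, T t -> is_coloop M t) ->
  forall F, is_base (finitarization M) F ->
    is_base (finitarization (contract M T)) (fun x => F x /\ ~ T x).
Proof.
  intros HM HT F [HFi HFmax].
  assert (HTF: subset T F).
  { intros t Ht. apply (HFmax _ (keyK HM HT _ HFi)); auto. intros x Hx; auto. }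
  split.
  - apply (find HM HT). split.
    + destruct HFi as [Hg Hf]. split.
      * intros x [Hx _]; auto.
      * intros G HG HGA. apply Hf; auto. intros x Hx; apply HGA; auto.
    + intros x [_ Hx]; exact Hx.
  - intros A HA HsA. apply (find HM HT) in HA. destruct HA as [HA HAT].
    pose proof (keyK HM HT _ HA) as HAT'.
    assert (HFA : subset F (fun x => A x \/ T x)).
    { intros x Hx. destruct (classic (T x)) as [Ht|Hnt]; auto. }
    pose proof (HFmax _ HAT' HFA) as H.
    intros x Hx. split; auto.
Qed.
Arguments base_d {E M T}.

Theorem theorem3p4p8 (E : Type) (M : setsys E) (T : E -> Prop) :
  is_matroid M ->
  nearly_finitary M ->
  (forall n : nat, ~ n_nearly_finitary n M) ->
  (forall t, T t -> is_coloop M t) ->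
  is_matroid (contract M T) /\
  nearly_finitary (contract M T) /\
  (forall n : nat, ~ n_nearly_finitary n (contract M T)).
Proof.
  intros HM Hnf Hnn HT. pose proof HM as (H1 & H0 & H2 & H3 & H4).
  split; [|split].
  - split; [|split; [|split; [|split]]].
    + intros A HA x Hx. apply (cind HM HT) in HA. destruct HA as [HA HAT].
      simpl. pose proof (H1 A HA x Hx). specialize (HAT x Hx). tauto.
    + apply (cind HM HT). split; auto.
    + intros A B HA HBA. apply (cind HM HT) in HA. destruct HA as [HA HAT].
      apply (cind HM HT). split. apply (H2 A); auto. intros x Hx; auto.
    + intros A B HA HnA HB. apply (cind HM HT) in HA as HA'. destruct HA' as [HAi HAT].
      destruct (extend_base HM _ HAi) as (B0 & HB0 & HAB0).
      pose proof (coloop_base HT _ HB0) as HTB0.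
      assert (HAu: indep M (fun x => A x \/ T x)).
      { apply (H2 B0). apply HB0. intros x [Hx|Hx]; auto. }
      assert (HnAu: ~ is_base M (fun x => A x \/ T x)).
      { intros [_ Hmax]. apply HnA. split; auto.
        intros A' HA' HsA'. apply (cind HM HT) in HA'. destruct HA' as [HA'i HA'T].
        destruct (extend_base HM _ HA'i) as (B1 & HB1 & HAB1).
        pose proof (coloop_base HT _ HB1) as HTB1.
        assert (HA'u: indep M (fun x => A' x \/ T x)).
        { apply (H2 B1). apply HB1. intros x [Hx|Hx]; auto. }
        assert (Hs: subset (fun x => A x \/ T x) (fun x => A' x \/ T x)).
        { intros x [Hx|Hx]; auto. }
        specialize (Hmax _ HA'u Hs). intros x Hx.
        destruct (Hmax x (or_introl Hx)) as [Hy|Hy]; auto. exfalso; apply (HA'T x); auto. }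
      destruct (H3 _ _ HAu HnAu (base_a HM HT _ HB)) as (b & Hb & Hnb & Hi).
      assert (HnTb: ~ T b) by tauto.
      exists b. split; [tauto|split; [tauto|]].
      apply (cind HM HT). split.
      * apply (H2 _ _ Hi). intros x [Hx|Hx]; auto.
      * intros x [Hx|Hx]; subst; auto.
    + intros A X HA HAX HX. apply (cind HM HT) in HA as HA'. destruct HA' as [HAi HAT].
      assert (HXg: subset X (ground M)) by (intros x Hx; apply HX in Hx; simpl in Hx; tauto).
      destruct (H4 A X HAi HAX HXg) as (S & HAS & HSX & HS & Hmax).
      exists S. split; auto. split; auto. split.
      * apply (cind HM HT). split; auto. intros x Hx. apply HSX, HX in Hx. simpl in Hx; tauto.
      * intros S' HS' HSS' HS'X. apply (cind HM HT) in HS'. apply Hmax; tauto.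
  - intros F B HF HB HBF.
    pose proof (base_c HM HT _ HF) as HF'. pose proof (base_a HM HT _ HB) as HB'.
    assert (Hs: subset B F \/ True) by auto.
    destruct (Hnf _ _ HF' HB') as [l Hl].
    + intros x [Hx|Hx]; auto.
    + exists l. intros x [HFx HnB]. apply Hl. split; auto.
      intros [Hb|Ht]; auto.
      destruct HF as [HFi _]. apply (find HM HT) in HFi. apply (proj2 HFi x); auto.
  - intros n Hn. apply (Hnn n). intros F B HF HB HBF.
    pose proof (base_d HM HT _ HF) as HF'. pose proof (base_b HM HT _ HB) as HB'.
    pose proof (coloop_base HT _ HB) as HTB.
    destruct (Hn _ _ HF' HB') as [l [Hlen Hl]].
    + intros x [Hx Ht]; auto.
    + exists l. split; auto. intros x [HFx HnB]. apply Hl.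
      assert (~ T x) by (intros Ht'; apply HnB, HTB, Ht'). tauto.
Qed.
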